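(* Let $T$ be an optimal Steiner tree of the regular $n$-simplex (terminals $\mathbf{e_1},\dots,\mathbf{e_n}\in\mathbb{R}^n$), and let $\mathbf{s}$ be a Steiner point of $T$ adjacent to a terminal $\mathbf{e_i}$. Then the two rays starting at $\mathbf{s}$ and extending the other two edges of $T$ at $\mathbf{s}$ leave the convex hull of the regular simplex at points of the face $F_i=\{\mathbf{x}\in\mathbb{R}^n: x_i=0,\ \|\mathbf{x}\|_1=1\}$.
   Context: A Steiner tree of a finite terminal set $P$ is a tree with vertex set $P\cup S$, $S$ a finite set of additional points (Steiner points), with Euclidean edge lengths; its cost is the total edge length. An optimal Steiner tree minimizes the cost; by convention it contains no trivial Steiner points (degree-$2$ points subdividing a straight segment), and every Steiner point of an optimal Steiner tree has exactly three neighbours. ''The point where a ray leaves the convex hull'' means the last point of the ray lying in the convex hull. *)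

(* Defs.v *)
From HB Require Import structures.
From mathcomp Require Import all_boot all_order all_algebra.
From mathcomp Require Import reals.
Set Implicit Arguments. Unset Strict Implicit. Unset Printing Implicit Defensive.
Import Order.TTheory GRing.Theory Num.Theory.
Local Open Scope ring_scope.

Definition enorm (R : realType) (n : nat) (x : 'rV[R]_n) : R :=
  Num.sqrt (\sum_(j < n) x 0 j ^+ 2).
Definition l1norm (R : realType) (n : nat) (x : 'rV[R]_n) : R :=
  \sum_(j < n) `|x 0 j|.

Definition acyclic (m : nat) (adj : rel 'I_m) : Prop :=
  forall c : seq 'I_m, uniq c -> (3 <= size c)%N -> ~~ cycle adj c.
Definition is_tree (m : nat) (adj : rel 'I_m) : Prop :=
  (forall i j, connect adj i j) /\ acyclic adj.

Record steiner_tree (R : realType) (n : nat) (P : seq 'rV[R]_n) := SteinerTree {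
  st_m : nat;
  st_pos : 'I_st_m -> 'rV[R]_n;
  st_adj : rel 'I_st_m;
  st_pos_inj : injective st_pos;
  st_sym : symmetric st_adj;
  st_irr : irreflexive st_adj;
  st_tree : is_tree st_adj;
  st_terms : forall p, p \in P -> exists i, st_pos i = p
}.
Arguments st_m {R n P} s : rename.
Arguments st_pos {R n P} s _ : rename.
Arguments st_adj {R n P} s _ _ : rename.

(* total edge length (each edge counted once) *)
Definition cost (R : realType) (n : nat) (P : seq 'rV[R]_n) (T : steiner_tree P) : R :=
  (\sum_(i < st_m T) \sum_(j < st_m T | st_adj T i j)
      enorm (st_pos T i - st_pos T j)) / 2.

Definition steiner_vertex (R : realType) (n : nat) (P : seq 'rV[R]_n)
  (T : steiner_tree P) (s : 'I_(st_m T)) : Prop := st_pos T s \notin P.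

Definition trivial_steiner (R : realType) (n : nat) (P : seq 'rV[R]_n)
  (T : steiner_tree P) (s : 'I_(st_m T)) : Prop :=
  steiner_vertex s /\
  exists a b, [/\ a != b, st_adj T s a, st_adj T s b,
    (forall c, st_adj T s c -> c = a \/ c = b) &
    exists t : R, 0 < t < 1 /\
      st_pos T s = (1 - t) *: st_pos T a + t *: st_pos T b].

(* optimal Steiner tree: minimal cost among all Steiner trees of P,
   and (by convention) without trivial Steiner points *)
Definition optimal_steiner_tree (R : realType) (n : nat) (P : seq 'rV[R]_n)
  (T : steiner_tree P) : Prop :=
  (forall T' : steiner_tree P, cost T <= cost T') /\
  (forall s : 'I_(st_m T), ~ trivial_steiner s).

Definition simplex_vertices (R : realType) (n : nat) : seq 'rV[R]_n :=
  [seq delta_mx 0 i | i <- enum 'I_n].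

Definition conv_hull (R : realType) (n : nat) (P : seq 'rV[R]_n) (x : 'rV[R]_n) : Prop :=
  exists w : 'I_(size P) -> R,
    [/\ forall k, 0 <= w k, \sum_k w k = 1 & x = \sum_k w k *: nth 0 P k].

Definition ray_exit_point (R : realType) (n : nat) (C : 'rV[R]_n -> Prop)
  (s u x : 'rV[R]_n) : Prop :=
  exists t0 : R, [/\ 0 <= t0, x = s + t0 *: (u - s), C x &
    forall t : R, t0 < t -> ~ C (s + t *: (u - s))].

Definition in_face (R : realType) (n : nat) (i : 'I_n) (x : 'rV[R]_n) : Prop :=
  x 0 i = 0 /\ l1norm x = 1.

(* Main.v *)
Require Import Defs.
From HB Require Import structures.
From mathcomp Require Import all_boot all_order all_algebra.
From mathcomp Require Import reals.
From mathcomp Require Import ring lra.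
Import Order.TTheory GRing.Theory Num.Theory.
Set Implicit Arguments. Unset Strict Implicit. Unset Printing Implicit Defensive.
Local Open Scope ring_scope.

Definition dot (R : realType) (n : nat) (a x : 'rV[R]_n) : R :=
  \sum_j a 0 j * x 0 j.
Definition sq (R : realType) (n : nat) (v : 'rV[R]_n) : R :=
  \sum_j v 0 j ^+ 2.

Lemma sq_ge0 (R : realType) (n : nat) (v : 'rV[R]_n) : 0 <= sq v.
Proof. by apply: sumr_ge0 => j _; rewrite sqr_ge0. Qed.

Lemma sq_eq0 (R : realType) (n : nat) (v : 'rV[R]_n) : sq v = 0 -> v = 0.
Proof.
move=> h; apply/rowP => j; rewrite mxE.
have := @psumr_eq0P _ _ _ _ (fun j _ => sqr_ge0 (v 0 j)) h j isT.
by move/eqP; rewrite sqrf_eq0 => /eqP.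
Qed.

Lemma dotBr (R : realType) (n : nat) (a x y : 'rV[R]_n) :
  dot a (x - y) = dot a x - dot a y.
Proof. by rewrite /dot -sumrB; apply: eq_bigr => j _; rewrite !mxE mulrBr. Qed.

Lemma dotDl (R : realType) (n : nat) (a b x : 'rV[R]_n) :
  dot (a + b) x = dot a x + dot b x.
Proof. by rewrite /dot -big_split; apply: eq_bigr => j _; rewrite !mxE mulrDl. Qed.

Lemma dotNl (R : realType) (n : nat) (a x : 'rV[R]_n) :
  dot (- a) x = - dot a x.
Proof. by rewrite /dot -sumrN; apply: eq_bigr => j _; rewrite !mxE mulNr. Qed.

Lemma dotZl (R : realType) (n : nat) (c : R) (a x : 'rV[R]_n) :
  dot (c *: a) x = c * dot a x.
Proof. by rewrite /dot mulr_sumr; apply: eq_bigr => j _; rewrite !mxE mulrA. Qed.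

Lemma dot_deltal (R : realType) (n : nat) (i : 'I_n) (x : 'rV[R]_n) :
  dot (delta_mx 0 i) x = x 0 i.
Proof.
rewrite /dot (bigD1 i) //= big1 ?addr0; first by rewrite mxE !eqxx mul1r.
by move=> j hj; rewrite mxE (negbTE hj) andbF mul0r.
Qed.

Lemma dot_deltar (R : realType) (n : nat) (i : 'I_n) (a : 'rV[R]_n) :
  dot a (delta_mx 0 i) = a 0 i.
Proof.
rewrite /dot (bigD1 i) //= big1 ?addr0; first by rewrite mxE !eqxx mulr1.
by move=> j hj; rewrite mxE (negbTE hj) andbF mulr0.
Qed.

Lemma sq_expand (R : realType) (n : nat) (v a : 'rV[R]_n) (e : R) :
  sq (v - e *: a) = sq v - 2 * e * dot a v + e ^+ 2 * sq a.
Proof.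
rewrite /sq /dot !mulr_sumr -sumrB -big_split /=.
by apply: eq_bigr => j _; rewrite !mxE; ring.
Qed.

Lemma sqN (R : realType) (n : nat) (v : 'rV[R]_n) : sq (- v) = sq v.
Proof. by apply: eq_bigr => j _; rewrite !mxE sqrrN. Qed.

Lemma sqZ (R : realType) (n : nat) (c : R) (v : 'rV[R]_n) :
  sq (c *: v) = c ^+ 2 * sq v.
Proof. by rewrite /sq mulr_sumr; apply: eq_bigr => j _; rewrite !mxE exprMn. Qed.

Lemma enormN (R : realType) (n : nat) (v : 'rV[R]_n) : enorm (- v) = enorm v.
Proof. by rewrite /enorm -/(sq _) sqN. Qed.

Lemma sqrt_le (R : realType) (X Y : R) :
  0 <= X -> 0 < Y -> Num.sqrt X <= (X + Y ^+ 2) / (2 * Y).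
Proof.
move=> hX hY; rewrite ler_pdivlMr; last by lra.
have h1 := sqr_sqrtr hX.
set s := Num.sqrt X in h1 *.
have : 0 <= (s - Y) ^+ 2 by rewrite sqr_ge0.
rewrite -h1; nra.
Qed.

Lemma enorm_bound (R : realType) (n : nat) (v a : 'rV[R]_n) (e : R) :
  0 < enorm v ->
  enorm (v - e *: a) <=
    enorm v - e * dot a v / enorm v + e ^+ 2 * sq a / (2 * enorm v).
Proof.
move=> hY.
have hsq : enorm v ^+ 2 = sq v by rewrite /enorm sqr_sqrtr // sq_ge0.
have := sqrt_le (sq_ge0 (v - e *: a)) hY.
rewrite -/(enorm _) sq_expand -hsq.
move=> h; apply: (le_trans h); rewrite le_eqVlt; apply/orP; left; apply/eqP.
have hY0 : enorm v != 0 by rewrite gt_eqF.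
by field.
Qed.

Definition costf (R : realType) (n m : nat) (adj : rel 'I_m)
  (pos : 'I_m -> 'rV[R]_n) : R :=
  (\sum_(i < m) \sum_(j < m | adj i j) enorm (pos i - pos j)) / 2.

Lemma costf_update (R : realType) (n m : nat) (adj : rel 'I_m)
  (pos : 'I_m -> 'rV[R]_n) (p : 'I_m) (v : 'rV[R]_n) :
  symmetric adj -> irreflexive adj ->
  costf adj (fun x => if x == p then v else pos x) - costf adj pos =
  \sum_(q < m | adj p q) (enorm (v - pos q) - enorm (pos p - pos q)).
Proof.
move=> hsym hirr.
set D := fun q => enorm (v - pos q) - enorm (pos p - pos q).
rewrite /costf -mulrBl -sumrB.
under eq_bigr => i _ do rewrite -sumrB.
have e1 : forall i j, adj i j ->
   enorm ((if i == p then v else pos i) - (if j == p then v else pos j))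
   - enorm (pos i - pos j) =
   (if i == p then D j else 0) + (if j == p then D i else 0).
  move=> i j hij.
  case: (eqVneq i p) => [hi|hi]; case: (eqVneq j p) => [hj|hj].
  - by move: hij; rewrite hi hj hirr.
  - by rewrite /D addr0 hi.
  - rewrite /D add0r hj -(enormN (v - pos i)) -(enormN (pos p - pos i)).
    by rewrite !opprB.
  - by rewrite subrr addr0.
under eq_bigr => i _ do (under eq_bigr => j hj do rewrite (e1 i j hj); rewrite big_split /=).
rewrite big_split /=.
have s1 : \sum_(i < m) \sum_(j < m | adj i j) (if i == p then D j else 0)
          = \sum_(q < m | adj p q) D q.
  rewrite (bigD1 p) //= eqxx [X in _ + X]big1 ?addr0 //.
  by move=> i hip; apply: big1 => j _; rewrite (negbTE hip).
have s2 : \sum_(i < m) \sum_(j < m | adj i j) (if j == p then D i else 0)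
          = \sum_(q < m | adj p q) D q.
  transitivity (\sum_(i < m) (if adj i p then D i else 0)).
    apply: eq_bigr => i _; rewrite big_mkcond /= (bigD1 p) //= eqxx big1 ?addr0.
      by case: (adj i p).
    by move=> j hj; rewrite (negbTE hj); case: (adj i j).
  rewrite [RHS]big_mkcond /=; apply: eq_bigr => i _.
  by rewrite hsym.
rewrite s1 s2; rewrite /D; lra.
Qed.

Lemma stationary (R : realType) (n : nat) (P : seq 'rV[R]_n)
  (T : steiner_tree P) (p : 'I_(st_m T)) (a : 'rV[R]_n) :
  optimal_steiner_tree T -> steiner_vertex p ->
  (forall q, st_adj T p q -> dot a (st_pos T q) <= dot a (st_pos T p)) ->
  forall q, st_adj T p q -> dot a (st_pos T q) = dot a (st_pos T p).
Proof.
move=> [opt _] hs hle q0 hq0.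
apply/eqP; rewrite eq_le hle //=; rewrite leNgt; apply/negP => hlt.
set pos := st_pos T in hle hlt hs *.
set adj := st_adj T in hle hq0 *.
have hinj : injective pos := @st_pos_inj _ _ _ T.
have hirr : irreflexive adj := @st_irr _ _ _ T.
have Ypos : forall q, adj p q -> 0 < enorm (pos p - pos q).
  move=> q hq; rewrite /enorm sqrtr_gt0 -/(sq _) lt_neqAle sq_ge0 andbT.
  apply/eqP => /esym /sq_eq0 /subr0_eq /hinj hpq.
  by move: hq; rewrite hpq hirr.
set A := \sum_(q < st_m T | adj p q)
           (dot a (pos p) - dot a (pos q)) / enorm (pos p - pos q).
have hA : 0 < A.
  rewrite /A (bigD1 q0) //=.
  have h1 : 0 < (dot a (pos p) - dot a (pos q0)) / enorm (pos p - pos q0).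
    by apply: divr_gt0; [rewrite subr_gt0 | apply: Ypos].
  have h2 : 0 <= \sum_(q < st_m T | adj p q && (q != q0))
           (dot a (pos p) - dot a (pos q)) / enorm (pos p - pos q).
    apply: sumr_ge0 => q /andP [hq _]; apply: divr_ge0.
      by rewrite subr_ge0 hle.
    exact: ltW (Ypos q hq).
  lra.
set B := \sum_(q < st_m T | adj p q) sq a / (2 * enorm (pos p - pos q)).
have hB : 0 <= B.
  apply: sumr_ge0 => q hq; apply: divr_ge0; first exact: sq_ge0.
  have := Ypos q hq; lra.
set del := (1 + \sum_(w < st_m T | w != p) (sq (pos w - pos p))^-1)^-1.
have Qpos : forall w, w != p -> 0 < sq (pos w - pos p).
  move=> w hw; rewrite lt_neqAle sq_ge0 andbT.
  apply/eqP => /esym /sq_eq0 /subr0_eq /hinj hwp.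
  by move: hw; rewrite hwp eqxx.
have Sge0 : 0 <= \sum_(w < st_m T | w != p) (sq (pos w - pos p))^-1.
  by apply: sumr_ge0 => w hw; rewrite invr_ge0 sq_ge0.
have hdel : 0 < del by rewrite /del invr_gt0; lra.
have del_lt : forall w, w != p -> del < sq (pos w - pos p).
  move=> w hw; rewrite /del (bigD1 w) //=.
  have hQ := Qpos w hw.
  have h2 : 0 <= \sum_(i < st_m T | (i != p) && (i != w))
                  (sq (pos i - pos p))^-1.
    by apply: sumr_ge0 => i _; rewrite invr_ge0 sq_ge0.
  have hQi : 0 < (sq (pos w - pos p))^-1 by rewrite invr_gt0.
  rewrite invf_plt ?posrE //; first lra.
  apply: addr_gt0 => //; apply: (lt_le_trans hQi); rewrite lerDl.
  by apply: sumr_ge0 => i _; rewrite invr_ge0 sq_ge0.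
set r1 := B / A.
set r2 := sq a / del.
have hr1 : 0 <= r1 by apply: divr_ge0 => //; exact: ltW.
have hr2 : 0 <= r2 by apply: divr_ge0; [exact: sq_ge0 | exact: ltW].
have er1 : r1 * A = B by rewrite /r1 divfK // gt_eqF.
have er2 : r2 * del = sq a by rewrite /r2 divfK // gt_eqF.
set X := 1 + r1 + r2.
have hX : 0 < X by rewrite /X; lra.
set eps := X^-1.
have heX : eps * X = 1 by rewrite /eps mulVf // gt_eqF.
have heps : 0 < eps by rewrite /eps invr_gt0.
have hXd : X = 1 + r1 + r2 by [].
rewrite hXd in heX.
have e1r : 0 <= eps * r1 by apply: mulr_ge0 => //; exact: ltW.
have e2r : 0 <= eps * r2 by apply: mulr_ge0 => //; exact: ltW.
have heps1 : eps <= 1 by lra.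
have h1 : eps * r1 < 1 by lra.
have h2 : eps * r2 < 1 by lra.
have hepsB : eps * B < A.
  have hh : 0 < A * (1 - eps * r1) by apply: mulr_gt0 => //; rewrite subr_gt0.
  by rewrite -er1 mulrA; nra.
have hepsa : eps * sq a < del.
  have hh : 0 < del * (1 - eps * r2) by apply: mulr_gt0 => //; rewrite subr_gt0.
  by rewrite -er2 mulrA; nra.
set v := pos p - eps *: a.
have vne : forall w, w != p -> v != pos w.
  move=> w hw; apply/eqP => e.
  have : sq (pos w - pos p) = eps ^+ 2 * sq a.
    by rewrite -e /v addrAC subrr add0r sqN sqZ.
  have := del_lt w hw; have := sq_ge0 a; nra.
pose pos' := fun x => if x == p then v else pos x.
have inj' : injective pos'.
  move=> x y; rewrite /pos'.
  case: (eqVneq x p) => [->|hx]; case: (eqVneq y p) => [->|hy] //.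
  - by move=> e; move: (vne y hy); rewrite e eqxx.
  - by move=> e; move: (vne x hx); rewrite e eqxx.
  - exact: hinj.
have terms' : forall x, x \in P -> exists i, pos' i = x.
  move=> x hx; case: (@st_terms _ _ _ T x hx) => i hi.
  exists i; rewrite /pos'; case: (eqVneq i p) => [hip|//].
  have hin : pos p \in P by rewrite -hip /pos hi.
  by move: hs; rewrite /steiner_vertex hin.
pose T' := @SteinerTree R n P (st_m T) pos' (st_adj T) inj'
   (@st_sym _ _ _ T) (@st_irr _ _ _ T) (@st_tree _ _ _ T) terms'.
have hc := opt T'.
have hdiff : cost T' - cost T =
  \sum_(q < st_m T | adj p q) (enorm (v - pos q) - enorm (pos p - pos q)).
  have -> : cost T' - cost T = costf adj pos' - costf adj pos by [].
  by apply: costf_update; [exact: (@st_sym _ _ _ T) | exact: hirr].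
have hle2 : \sum_(q < st_m T | adj p q) (enorm (v - pos q) - enorm (pos p - pos q))
   <= - eps * A + eps ^+ 2 * B.
  have -> : - eps * A + eps ^+ 2 * B =
     \sum_(q < st_m T | adj p q)
        (- eps * ((dot a (pos p) - dot a (pos q)) / enorm (pos p - pos q))
         + eps ^+ 2 * (sq a / (2 * enorm (pos p - pos q)))).
    by rewrite /A /B !mulr_sumr -big_split.
  apply: ler_sum => q hq.
  have -> : v - pos q = (pos p - pos q) - eps *: a.
    by rewrite /v addrAC.
  have hb := enorm_bound a eps (Ypos q hq).
  rewrite dotBr in hb.
  have hY := Ypos q hq.
  have hY0 : enorm (pos p - pos q) != 0 by rewrite gt_eqF.
  set Y := enorm (pos p - pos q) in hb hY hY0 *.
  set d := dot a (pos p) - dot a (pos q) in hb *.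
  have e : Y - eps * d / Y + eps ^+ 2 * sq a / (2 * Y) - Y =
     - eps * (d / Y) + eps ^+ 2 * (sq a / (2 * Y)) by field.
  lra.
have : - eps * A + eps ^+ 2 * B < 0 by nra.
lra.
Qed.

Lemma spread (R : realType) (n : nat) (P : seq 'rV[R]_n)
  (T : steiner_tree P) (a : 'rV[R]_n) (p0 t0 : 'I_(st_m T)) :
  optimal_steiner_tree T ->
  (forall q, dot a (st_pos T q) <= dot a (st_pos T p0)) ->
  st_pos T t0 \in P ->
  (forall x, st_pos T x \in P -> dot a (st_pos T x) < dot a (st_pos T p0)) ->
  False.
Proof.
move=> hopt hmax ht0 hterm.
set M := dot a (st_pos T p0) in hmax hterm.
suff key : forall c x, dot a (st_pos T x) = M -> path (st_adj T) x c ->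
    dot a (st_pos T (last x c)) = M.
  case/connectP: ((st_tree T).1 p0 t0) => c hc hl.
  have := key c p0 erefl hc; rewrite -hl => e.
  by have := hterm t0 ht0; rewrite e ltxx.
elim=> [|y c IH] x hx //= /andP [hxy hp].
apply: IH hp.
have hsx : steiner_vertex x.
  rewrite /steiner_vertex; apply/negP => hin.
  by have := hterm x hin; rewrite hx ltxx.
rewrite -hx; apply: (stationary hopt hsx) => // q _.
by rewrite hx hmax.
Qed.

Lemma bound (R : realType) (n : nat) (P : seq 'rV[R]_n)
  (T : steiner_tree P) (a : 'rV[R]_n) (t0 : 'I_(st_m T)) (c : R) :
  optimal_steiner_tree T -> st_pos T t0 \in P ->
  (forall x, st_pos T x \in P -> dot a (st_pos T x) <= c) ->
  forall p, dot a (st_pos T p) <= c.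
Proof.
move=> hopt ht0 hterm p.
case: (@arg_maxP _ _ _ t0 xpredT (fun j => dot a (st_pos T j)) isT) => p0 _ hmax.
have hmax' : forall q, dot a (st_pos T q) <= dot a (st_pos T p0).
  by move=> q; apply: hmax.
case: (lerP (dot a (st_pos T p0)) c) => hc.
  exact: le_trans (hmax' p) hc.
exfalso; apply: (spread hopt hmax' ht0) => x hx.
exact: le_lt_trans (hterm x hx) hc.
Qed.

Lemma walk (R : realType) (n : nat) (P : seq 'rV[R]_n)
  (T : steiner_tree P) (a : 'rV[R]_n) (s u t : 'I_(st_m T)) :
  optimal_steiner_tree T ->
  st_adj T s u -> st_adj T s t -> u != t ->
  dot a (st_pos T s) < dot a (st_pos T u) ->
  (forall x, st_pos T x \in P -> dot a (st_pos T s) < dot a (st_pos T x) -> x = t) ->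
  False.
Proof.
move=> hopt hsu hst hut hlt0 hterm.
set phi := fun x => dot a (st_pos T x).
set adj := st_adj T.
set lt := fun x y => phi x < phi y.
have hsym : symmetric adj := @st_sym _ _ _ T.
have step : forall x y, steiner_vertex x -> adj x y -> phi y < phi x ->
    exists z, adj x z /\ phi x < phi z.
  move=> x y hx hxy hyx.
  case: (boolP [exists z, adj x z && (phi x < phi z)]).
    by case/existsP => z /andP [h1 h2]; exists z.
  move/existsPn => hn; exfalso.
  have := @stationary _ _ _ T x a hopt hx.
  move=> /(_ _ y hxy) => h.
  suff : phi y = phi x by move=> e; move: hyx; rewrite e ltxx.
  apply: h => q hq; move: (hn q); rewrite /adj hq /= -leNgt; exact.
have ltT : transitive lt by move=> x y z; rewrite /lt; apply: lt_trans.
have ltI : irreflexive lt by move=> x; rewrite /lt ltxx.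
suff : forall N c x, (st_m T - size c <= N)%N -> path adj s (rcons c x) ->
   path lt s (rcons c x) -> u \in rcons c x -> False.
  move/(_ (st_m T) [::] u); apply => //=; rewrite ?subn0 ?andbT ?inE //.
elim=> [|N IH] c x hN hp hl hu.
all: have huniq : uniq (s :: rcons c x) by apply: (sorted_uniq ltT ltI).
all: have hsz : (size (s :: rcons c x) <= st_m T)%N
       by rewrite -(elimT card_uniqP huniq); apply: leq_trans (max_card _) _; rewrite card_ord.
all: rewrite /= size_rcons in hsz.
  by move: hN; rewrite leqn0 subn_eq0 => h; move: (leq_trans hsz h); rewrite ltnNge leqnSn.
have hsx : phi s < phi x.
  have := order_path_min ltT hl => /allP; apply; by rewrite mem_rcons inE eqxx.
case: (boolP (st_pos T x \in P)) => hxP.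
  have hxt := hterm x hxP hsx.
  have hc : cycle adj (s :: rcons c x).
    rewrite /= rcons_path hp last_rcons /= hxt.
    by rewrite hsym.
  have h3 : (3 <= size (s :: rcons c x))%N.
    rewrite /= size_rcons; move: hu; rewrite mem_rcons inE hxt (negbTE hut) /=.
    by case: (c).
  by move: ((st_tree T).2 _ huniq h3); rewrite hc.
have [z [hxz hz]] : exists z, adj x z /\ phi x < phi z.
  move: hp hl; rewrite !rcons_path => /andP [_ h1] /andP [_ h2].
  apply: (step x (last s c)) => //; by rewrite hsym.
apply: (IH (rcons c x) z).
- by rewrite size_rcons subnS; move: hN; case: (st_m T - size c)%N.
- by rewrite rcons_path hp last_rcons.
- by rewrite rcons_path hl last_rcons.
- by rewrite mem_rcons inE hu orbT.
Qed.

Lemma simplex_mem (R : realType) (n : nat) (x : 'rV[R]_n) :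
  x \in simplex_vertices R n -> exists j, x = delta_mx 0 j.
Proof. by case/mapP => j _ ->; exists j. Qed.

Lemma simplex_in (R : realType) (n : nat) (j : 'I_n) :
  delta_mx 0 j \in simplex_vertices R n.
Proof. by apply: map_f; rewrite mem_enum. Qed.

Lemma hull_ge0 (R : realType) (n : nat) (y : 'rV[R]_n) (c : 'I_n) :
  conv_hull (simplex_vertices R n) y -> 0 <= y 0 c.
Proof.
case=> w [hw _ ->]; rewrite summxE; apply: sumr_ge0 => k _.
rewrite mxE; apply: mulr_ge0 => //.
have : nth 0 (simplex_vertices R n) k \in simplex_vertices R n by apply: mem_nth.
by case/simplex_mem => j ->; rewrite mxE ler0n.
Qed.

Lemma hull_in (R : realType) (n : nat) (x : 'rV[R]_n) :
  (forall c, 0 <= x 0 c) -> \sum_c x 0 c = 1 ->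
  conv_hull (simplex_vertices R n) x.
Proof.
move=> h0 h1; rewrite /conv_hull.
have hs : size (simplex_vertices R n) = n by rewrite size_map size_enum_ord.
rewrite hs; exists (fun k => x 0 k); split => //.
rewrite {1}(row_sum_delta x); apply: eq_bigr => k _; congr (_ *: _).
by rewrite /simplex_vertices (nth_map k) ?size_enum_ord // nth_ord_enum.
Qed.

Unset Implicit Arguments.

Theorem mainTheorem8 (R : realType) (n : nat)
  (T : steiner_tree (simplex_vertices R n)) :
  optimal_steiner_tree T ->
  forall (s t u : 'I_(st_m T)) (i : 'I_n),
    steiner_vertex s ->
    st_pos T t = delta_mx 0 i ->
    st_adj T s t ->
    st_adj T s u -> u != t ->
    exists x : 'rV[R]_n,
      ray_exit_point (conv_hull (simplex_vertices R n)) (st_pos T s) (st_pos T u) x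
      /\ in_face i x.
Proof.
move=> hopt s t u i hs hti hst hsu hut.
have htP : st_pos T t \in simplex_vertices R n by rewrite hti simplex_in.
have hinj := @st_pos_inj _ _ _ T.
have hirr := @st_irr _ _ _ T.
pose one := const_mx 1 : 'rV[R]_n.
have dot_one : forall x : 'rV[R]_n, dot one x = \sum_c x 0 c.
  by move=> x; apply: eq_bigr => c _; rewrite mxE mul1r.
have sum_delta : forall j : 'I_n, \sum_c (delta_mx 0 j : 'rV[R]_n) 0 c = 1.
  by move=> j; rewrite -dot_one dot_deltar mxE.
have hsum : forall p, \sum_c st_pos T p 0 c = 1.
  move=> p; apply/eqP; rewrite eq_le; apply/andP; split.
    rewrite -dot_one; apply: (bound hopt htP) => x /simplex_mem [j ->].
    by rewrite dot_one sum_delta.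
  have := @bound _ _ _ T (- one) t (-1) hopt htP _ p.
  rewrite dotNl dot_one lerN2; apply => x /simplex_mem [j ->].
  by rewrite dotNl dot_one sum_delta.
have hge : forall p, 0 <= st_pos T p 0 i.
  move=> p; have := @bound _ _ _ T (- delta_mx 0 i) t 0 hopt htP _ p.
  rewrite dotNl dot_deltal oppr_le0; apply => x /simplex_mem [j ->].
  by rewrite dotNl dot_deltal oppr_le0 mxE ler0n.
have hsi : 0 < st_pos T s 0 i.
  rewrite lt_neqAle hge andbT; apply/eqP => h0.
  have hyp : forall q, st_adj T s q ->
      dot (- delta_mx 0 i) (st_pos T q) <= dot (- delta_mx 0 i) (st_pos T s).
    by move=> q _; rewrite !dotNl !dot_deltal -h0 oppr0 oppr_le0 hge.
  have := stationary hopt hs hyp hst.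
  rewrite !dotNl !dot_deltal hti -h0 mxE !eqxx /= => /eqP.
  by rewrite oppr0 oppr_eq0 oner_eq0.
have F4 : forall k, k != i ->
    st_pos T s 0 k * st_pos T u 0 i - st_pos T s 0 i * st_pos T u 0 k <= 0.
  move=> k hk.
  pose a : 'rV[R]_n := st_pos T s 0 k *: delta_mx 0 i - st_pos T s 0 i *: delta_mx 0 k.
  have hdot : forall x, dot a x = st_pos T s 0 k * x 0 i - st_pos T s 0 i * x 0 k.
    by move=> x; rewrite dotDl dotNl !dotZl !dot_deltal.
  rewrite leNgt; apply/negP => hlt.
  apply: (@walk _ _ _ T a s u t hopt hsu hst hut).
    by rewrite !hdot; lra.
  move=> x hx; have [j hj] := simplex_mem hx.
  rewrite !hdot hj !mxE !eqxx /=.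
  case: (eqVneq j i) => [ji|ji].
    by move=> _; apply: hinj; rewrite hj hti ji.
  rewrite mulr0 sub0r.
  have : 0 <= st_pos T s 0 i * (k == j)%:R by apply: mulr_ge0; [exact: ltW | exact: ler0n].
  move=> h2 h1; exfalso.
  have h3 : st_pos T s 0 k * st_pos T s 0 i - st_pos T s 0 i * st_pos T s 0 k = 0 by ring.
  by rewrite h3 oppr_gt0 ltNge h2 in h1.
pose si := st_pos T s 0 i.
pose di := st_pos T u 0 i - st_pos T s 0 i.
pose g := fun k => si * (st_pos T u 0 k - st_pos T s 0 k) - st_pos T s 0 k * di.
have hg : forall k, 0 <= g k.
  move=> k; rewrite /g /di /si; case: (eqVneq k i) => [->|hk].
    by rewrite mulrC subrr.
  by have := F4 k hk; lra.
have hsumd : \sum_k (st_pos T u 0 k - st_pos T s 0 k) = 0.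
  by rewrite sumrB !hsum subrr.
have hsumg : \sum_k g k = - di.
  rewrite /g sumrB -mulr_sumr -mulr_suml hsumd hsum; ring.
have hdi : di < 0.
  rewrite lt_neqAle; apply/andP; split; last first.
    have : 0 <= \sum_k g k by apply: sumr_ge0 => k _; exact: hg.
    rewrite hsumg; lra.
  apply/eqP => h0.
  have gz := @psumr_eq0P _ _ xpredT g (fun k _ => hg k).
  rewrite hsumg h0 oppr0 in gz.
  have hus : st_pos T u = st_pos T s.
    apply/rowP => k; have := gz erefl k isT; rewrite /g h0 mulr0 subr0.
    move/eqP; rewrite mulf_eq0 (gt_eqF hsi) /= subr_eq0 => /eqP.
    exact.
  by move: hsu; rewrite (hinj _ _ hus) hirr.
pose tau := si / (- di).
pose x := st_pos T s + tau *: (st_pos T u - st_pos T s).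
have hdi0 : di != 0 by rewrite lt_eqF.
have hx : forall k, x 0 k = g k / (- di).
  move=> k; rewrite /x /tau /g !mxE; field.
  by [].  
have hx0 : forall k, 0 <= x 0 k.
  by move=> k; rewrite hx; apply: divr_ge0 => //; lra.
have hxi : x 0 i = 0.
  by rewrite hx /g /di /si mulrC subrr mulr0.
have hxsum : \sum_k x 0 k = 1.
  under eq_bigr => k _ do rewrite hx.
  by rewrite -mulr_suml hsumg divff // oppr_eq0.
have hC : conv_hull (simplex_vertices R n) x by apply: hull_in.
exists x; split; last first.
  split => //; rewrite /l1norm -hxsum.
  by apply: eq_bigr => k _; rewrite ger0_norm.
exists tau; split => //.
  by rewrite /tau; apply: divr_ge0; [exact: ltW | lra].
move=> t' ht' hC'.
have := hull_ge0 i hC'; rewrite !mxE.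
have etau : tau * di = - si by rewrite /tau; field.
rewrite -/si -/di.
nra.
Qed.
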